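(* Let $(X,\phi)$ be a uniformly Lipschitz flow on a metric space $(X,d)$. Then for every non-empty subset $Z\subset X$, $$\overline{\mathrm{mdim}}^B(\phi,Z,d)=\overline{\mathrm{mdim}}^B(\phi_1,Z,d).$$
   Context: A flow: $\phi:X\times\mathbb{R}\to X$ continuous, $\phi_t(x)=\phi(x,t)$, $\phi_0=\mathrm{id}$, $\phi_{t+s}=\phi_t\circ\phi_s$. Uniformly Lipschitz: for every $t_0>0$ there is $L(t_0)>0$ such that for all $\epsilon>0$ and $x,y\in X$, $d(x,y)\le\epsilon/L(t_0)$ implies $d(\phi_sx,\phi_sy)<\epsilon$ for all $s\in[0,t_0]$. Balls: $B_n(x,\epsilon,\phi)=\{y:d(\phi_sx,\phi_sy)<\epsilon\ \forall s\in[0,n]\}$ and $B_n(x,\epsilon,\phi_1)=\{y:d(\phi_jx,\phi_jy)<\epsilon,\ j=0,\dots,n-1\}$. Bowen upper metric mean dimension: for $\lambda\in\mathbb{R}$, $N\in\mathbb{N}$, $\epsilon>0$, $M(\phi,d,Z,\lambda,N,\epsilon)=\inf\sum_{i\in I}e^{-n_i\lambda}$ over finite or countable families $\{B_{n_i}(x_i,\epsilon,\phi)\}_{i\in I}$ covering $Z$ with integers $n_i\ge N$; $M(\phi,d,Z,\lambda,\epsilon)=\lim_{N\to\infty}M(\phi,d,Z,\lambda,N,\epsilon)$; $M(\phi,d,Z,\epsilon)=\inf\{\lambda:M(\phi,d,Z,\lambda,\epsilon)=0\}$; $\overline{\mathrm{mdim}}^B(\phi,Z,d)=\limsup_{\epsilon\to0}\frac{M(\phi,d,Z,\epsilon)}{\log(1/\epsilon)}$.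 The quantity $\overline{\mathrm{mdim}}^B(\phi_1,Z,d)$ is defined identically with $B_{n_i}(x_i,\epsilon,\phi)$ replaced by $B_{n_i}(x_i,\epsilon,\phi_1)$. *)

(* Defs.v *)
From HB Require Import structures.
From mathcomp Require Import all_boot all_order all_algebra.
From mathcomp Require Import all_classical all_reals all_analysis.
Set Implicit Arguments. Unset Strict Implicit. Unset Printing Implicit Defensive.
Import Order.TTheory GRing.Theory Num.Theory.
Local Open Scope classical_set_scope.
Local Open Scope ring_scope.

Section Defs.
Variable R : realType.
Variable X : Type.

Definition is_metric (d : X -> X -> R) : Prop :=
  [/\ (forall x y, 0 <= d x y),
      (forall x y, d x y = 0 <-> x = y),
      (forall x y, d x y = d y x) &
      (forall x y z, d x z <= d x y + d y z)].

Definition is_flow (d : X -> X -> R) (phi : X -> R -> X) : Prop :=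
  [/\ (forall x t (eps : R), 0 < eps -> exists2 delta : R, 0 < delta &
         forall y s, d x y < delta -> `|t - s| < delta ->
                     d (phi x t) (phi y s) < eps),
      (forall x, phi x 0 = x) &
      (forall x t s, phi x (t + s) = phi (phi x s) t)].

Definition uniformly_lipschitz (d : X -> X -> R) (phi : X -> R -> X) : Prop :=
  forall t0 : R, 0 < t0 -> exists2 L : R, 0 < L &
    forall (eps : R) (x y : X), 0 < eps -> d x y <= eps / L ->
      forall s : R, 0 <= s <= t0 -> d (phi x s) (phi y s) < eps.

Definition bowen_ball_flow (d : X -> X -> R) (phi : X -> R -> X)
    (n : nat) (x : X) (eps : R) : set X :=
  [set y | forall s : R, 0 <= s <= n%:R -> d (phi x s) (phi y s) < eps].

Definition bowen_ball_map (d : X -> X -> R) (phi : X -> R -> X)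
    (n : nat) (x : X) (eps : R) : set X :=
  [set y | forall j : nat, (j < n)%N ->
     d (iter j (phi^~ 1) x) (iter j (phi^~ 1) y) < eps].

(* A generic "ball system" B n x eps; the two quantities differ only by it. *)
Variable B : nat -> X -> R -> set X.

(* M(Z, lambda, N, eps): infimum over finite or countable families
   {B_{n_i}(x_i,eps)}_{i in I} (I a subset of nat) covering Z with n_i >= N *)
Definition M_N (Z : set X) (lambda : R) (N : nat) (eps : R) : \bar R :=
  ereal_inf [set v : \bar R | exists (I : set nat) (n : nat -> nat) (x : nat -> X),
      [/\ (forall i, I i -> (N <= n i)%N),
          Z `<=` \bigcup_(i in I) B (n i) (x i) eps &
          v = (\esum_(i in I) (expR (- ((n i)%:R * lambda)))%:E)%E]].

Definition M_lim (Z : set X) (lambda eps : R) : \bar R :=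
  limn (fun N => M_N Z lambda N eps).

Definition M_crit (Z : set X) (eps : R) : \bar R :=
  ereal_inf [set lambda%:E | lambda in [set lambda | M_lim Z lambda eps = 0%E]].

Definition upper_mdim (Z : set X) : \bar R :=
  ereal_inf [set ereal_sup [set (M_crit Z eps * ((ln (1 / eps))^-1)%:E)%E
                           | eps in [set eps : R | 0 < eps < delta]]
            | delta in [set delta : R | 0 < delta]].

End Defs.

Definition mdimB_flow (R : realType) (X : Type) (d : X -> X -> R)
  (phi : X -> R -> X) (Z : set X) : \bar R :=
  upper_mdim (bowen_ball_flow d phi) Z.

Definition mdimB_map (R : realType) (X : Type) (d : X -> X -> R)
  (phi : X -> R -> X) (Z : set X) : \bar R :=
  upper_mdim (bowen_ball_map d phi) Z.

(* Main.v *)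
Require Import Defs.
From mathcomp Require Import all_boot all_order all_algebra.
From mathcomp Require Import all_classical all_reals all_analysis.
From mathcomp Require Import ring lra.
Import Order.TTheory GRing.Theory Num.Theory.
Local Open Scope classical_set_scope.
Local Open Scope ring_scope.

Section Helpers.

Lemma esumZ_le {R : realType} {T : choiceType} (S : set T) (c : R) (F : T -> \bar R) :
  0 <= c -> (forall i, (0 <= F i)%E) ->
  (\esum_(i in S) (c%:E * F i) <= c%:E * \esum_(i in S) F i)%E.
Proof.
move=> c0 F0; apply: ge_ereal_sup => _ [A [finA AS] <-].
rewrite -ge0_mule_fsumr //; apply: lee_wpmul2l; first by rewrite lee_fin.
by apply: ereal_sup_ubound; exists A.
Qed.

Lemma M_N_ge0 {R : realType} {X : Type} (B : nat -> X -> R -> set X) Z lam N eps :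
  (0 <= M_N B Z lam N eps)%E.
Proof.
apply/ereal_infP => _ [I [n [x [_ _ ->]]]]; apply: esum_ge0 => i _.
by rewrite lee_fin expR_ge0.
Qed.

Lemma M_N_homo {R : realType} {X : Type} (B : nat -> X -> R -> set X) Z lam eps :
  {homo (fun N => M_N B Z lam N eps) : N N' / (N <= N')%N >-> (N <= N')%E}.
Proof.
move=> N N' NN'; apply/ereal_infP => _ [I [n [x [HN Hc ->]]]].
apply: ereal_inf_lbound; exists I, n, x; split => // i Ii.
exact: leq_trans NN' (HN i Ii).
Qed.

Lemma M_limE {R : realType} {X : Type} (B : nat -> X -> R -> set X) Z lam eps :
  M_lim B Z lam eps = ereal_sup (range (fun N => M_N B Z lam N eps)).
Proof.
apply/cvg_lim => //; apply: ereal_nondecreasing_cvgn; exact: M_N_homo.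
Qed.

Lemma M_N_le_lim {R : realType} {X : Type} (B : nat -> X -> R -> set X) Z lam N eps :
  (M_N B Z lam N eps <= M_lim B Z lam eps)%E.
Proof. by rewrite M_limE; apply: ereal_sup_ubound; exists N. Qed.

Lemma M_lim_ge0 {R : realType} {X : Type} (B : nat -> X -> R -> set X) Z lam eps :
  (0 <= M_lim B Z lam eps)%E.
Proof. exact: le_trans (M_N_ge0 B Z lam 0 eps) (M_N_le_lim _ _ _ _ _). Qed.

Lemma M_crit_le {R : realType} {X : Type} (B1 B2 : nat -> X -> R -> set X) Z eps1 eps2 :
  (forall lam, M_lim B1 Z lam eps1 = 0%E -> M_lim B2 Z lam eps2 = 0%E) ->
  (M_crit B2 Z eps2 <= M_crit B1 Z eps1)%E.
Proof.
move=> H; apply: ereal_inf_le_tmp => _ [l Hl <-]; exists l => //; exact: H.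
Qed.

Lemma transfer_same {R : realType} {X : Type} (B1 B2 : nat -> X -> R -> set X) Z eps1 eps2 :
  (forall n x, B1 n x eps1 `<=` B2 n x eps2) ->
  forall lam, M_lim B1 Z lam eps1 = 0%E -> M_lim B2 Z lam eps2 = 0%E.
Proof.
move=> sub lam H0; apply/eqP; rewrite eq_le M_lim_ge0 andbT -H0 M_limE.
apply: ge_ereal_sup => _ [N _ <-].
apply: le_trans (M_N_le_lim B1 Z lam N eps1).
apply/ereal_infP => _ [I [n [x [HN Hc ->]]]]; apply: ereal_inf_lbound.
exists I, n, x; split => //.
apply: subset_trans Hc _ => z [i Ii Hz]; exists i => //; exact: sub.
Qed.

Lemma transfer_shift {R : realType} {X : Type} (B1 B2 : nat -> X -> R -> set X) Z eps1 eps2 :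
  (forall n x, B1 n.+1 x eps1 `<=` B2 n x eps2) ->
  forall lam, M_lim B1 Z lam eps1 = 0%E -> M_lim B2 Z lam eps2 = 0%E.
Proof.
move=> sub lam H0.
have H1 N : M_N B1 Z lam N eps1 = 0%E.
  by apply/eqP; rewrite eq_le M_N_ge0 andbT -H0; exact: M_N_le_lim.
apply/eqP; rewrite eq_le M_lim_ge0 andbT M_limE.
apply: ge_ereal_sup => _ [N _ <-].
set c := expR lam.
have c0 : 0 < c by exact: expR_gt0.
have key : ((c^-1)%:E * M_N B2 Z lam N eps2 <= M_N B1 Z lam N.+1 eps1)%E.
  apply/ereal_infP => _ [I [n [x [HN Hc ->]]]].
  have le1 : (M_N B2 Z lam N eps2 <=
      c%:E * \esum_(i in I) (expR (- ((n i)%:R * lam)))%:E)%E.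
    have F0 : forall i, (0 <= (expR (- ((n i)%:R * lam)))%:E)%E.
      by move=> i; rewrite lee_fin expR_ge0.
    apply: le_trans (esumZ_le I c _ (ltW c0) F0).
    apply: ereal_inf_lbound; exists I, (fun i => (n i).-1), x; split.
    - by move=> i Ii; case: (n i) (HN i Ii).
    - apply: subset_trans Hc _ => z [i Ii Hz]; exists i => //.
      have E : (n i).-1.+1 = n i by apply: prednK; exact: leq_trans (HN i Ii).
      by apply: sub; rewrite E.
    - apply: eq_esum => i Ii.
      have E : (n i).-1.+1 = n i by apply: prednK; exact: leq_trans (HN i Ii).
      rewrite -EFinM -expRD; congr (EFin (expR _)).
      rewrite -[in LHS]E mulrS; ring.
  apply: le_trans (lee_wpmul2l _ le1) _; first by rewrite lee_fin invr_ge0 ltW.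
  by rewrite muleA -EFinM mulVf ?gt_eqF // mul1e.
rewrite H1 in key.
rewrite -[M_N B2 Z lam N eps2]mul1e -(@mulfV _ c (lt0r_neq0 c0)) EFinM -muleA.
apply: le_trans (lee_wpmul2l _ key) _; first by rewrite lee_fin ltW.
by rewrite mule0.
Qed.

Lemma iter_phi {R : realType} {X : Type} (d : X -> X -> R) (phi : X -> R -> X) :
  is_flow d phi -> forall j x, iter j (phi^~ 1) x = phi x j%:R.
Proof.
case=> _ H0 Hadd j x; elim: j => [|j IH] /=; first by rewrite H0.
by rewrite IH -Hadd mulrS.
Qed.

Lemma ball_flow_map {R : realType} {X : Type} (d : X -> X -> R) (phi : X -> R -> X) :
  is_flow d phi -> forall n x eps,
  bowen_ball_flow d phi n x eps `<=` bowen_ball_map d phi n x eps.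
Proof.
move=> Hf n x eps y Hy j jn; rewrite !(iter_phi d phi Hf); apply: Hy.
by rewrite ler0n /= ler_nat ltnW.
Qed.

Lemma ball_map_flow {R : realType} {X : Type} (d : X -> X -> R) (phi : X -> R -> X) L :
  is_flow d phi -> 0 < L ->
  (forall eps x y, 0 < eps -> d x y <= eps / L ->
      forall s, 0 <= s <= 1 -> d (phi x s) (phi y s) < eps) ->
  forall n x eps, 0 < eps ->
  bowen_ball_map d phi n.+1 x (eps / L) `<=` bowen_ball_flow d phi n x eps.
Proof.
move=> Hf L0 HL n x eps e0 y Hy s /andP[s0 sn].
have Hadd : forall x t s, phi x (t + s) = phi (phi x s) t by case: Hf.
have /andP[js sj] := truncn_itv s0.
set j := Num.truncn s in js sj.
have jn : (j < n.+1)%N.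
  rewrite ltnS truncn_le_nat; apply: le_lt_trans sn _; by rewrite ltr_nat.
have E z : phi z s = phi (iter j (phi^~ 1) z) (s - j%:R).
  by rewrite (iter_phi d phi Hf) -Hadd subrK.
rewrite !E; apply: HL => //; first exact: ltW (Hy j jn).
rewrite subr_ge0 js /= lerBlDr; rewrite mulrS in sj.
exact: ltW.
Qed.

Definition U {R : realType} (h : R -> \bar R) : \bar R :=
  ereal_inf [set ereal_sup [set (h eps * ((ln (1 / eps))^-1)%:E)%E
                           | eps in [set eps : R | 0 < eps < delta]]
            | delta in [set delta : R | 0 < delta]].

Lemma U_le {R : realType} (f g : R -> \bar R) :
  (forall eps, 0 < eps < 1 -> (f eps <= g eps)%E) -> (U f <= U g)%E.
Proof.
move=> fg; apply/ereal_infP => _ [delta d0 <-].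
apply: ge_ereal_inf.
exists (ereal_sup [set (f eps * ((ln (1 / eps))^-1)%:E)%E
                   | eps in [set eps : R | 0 < eps < Num.min delta 1]]).
  by exists (Num.min delta 1) => //; rewrite /= lt_min d0 ltr01.
apply: ge_ereal_sup => _ [eps /andP[e0 H] <-]; move: H; rewrite lt_min => /andP[ed e1].
apply: le_trans (_ : (g eps * ((ln (1 / eps))^-1)%:E <= _)%E).
  apply: lee_wpmul2r; last by apply: fg; rewrite e0 e1.
  by rewrite lee_fin invr_ge0 ln_ge0 // div1r invf_ge1 // ltW.
by apply: ereal_sup_ubound; exists eps => //; rewrite /= e0 ed.
Qed.

Lemma le_from_gt {R : realType} (x y : \bar R) :
  (forall c : R, (y < c%:E)%E -> (x <= c%:E)%E) -> (x <= y)%E.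
Proof.
case: y => [r| |] H.
- apply/lee_addgt0Pr => e e0; rewrite -EFinD; apply: H.
  by rewrite lte_fin ltrDl.
- exact: leey.
- case: x H => [r| |] H.
  + have h := H (r - 1)%R (ltNyr _); rewrite lee_fin in h; exfalso; lra.
  + by have := H 0 (ltNyr _).
  + by [].
Qed.

Lemma U_scale {R : realType} (f g : R -> \bar R) (L : R) : 1 <= L ->
  (forall eps, 0 < eps < 1 -> (f eps <= g (eps / L)%R)%E) -> (U f <= U g)%E.
Proof.
move=> L1 fg.
have L0 : 0 < L by exact: lt_le_trans ltr01 L1.
apply: le_from_gt => c /ereal_inf_lt [_ [delta0 d0 <-] Hlt].
set y := ereal_sup _ in Hlt.
have gy eps : 0 < eps < delta0 -> (g eps * ((ln (1 / eps))^-1)%:E <= y)%E.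
  by move=> H; apply: ereal_sup_ubound; exists eps.
clearbody y.
have gen : forall y' : \bar R, (y' < c%:E)%E -> exists2 s : R, (y' <= s%:E)%E & s < c.
  case=> [r| |] //= H.
  - by exists r => //; rewrite -lte_fin.
  - by exists (c - 1)%R => //; [exact: leNye | lra].
have [s ys sc] := gen y Hlt.
set K := `|s| * ln L / (c - s).
have cs0 : 0 < c - s by rewrite subr_gt0.
have eqK : K * (c - s) = `|s| * ln L by rewrite /K divfK // gt_eqF.
set delta1 := Num.min (Num.min delta0 (1/2)) (expR (- K)).
apply: ge_ereal_inf.
exists (ereal_sup [set (f eps * ((ln (1 / eps))^-1)%:E)%E
                   | eps in [set eps : R | 0 < eps < delta1]]).
  by exists delta1 => //; rewrite /= !lt_min d0 expR_gt0 /=; lra.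
apply: ge_ereal_sup => _ [eps /andP[e0 elt] <-].
move: elt; rewrite !lt_min => /andP[/andP[ed0 ehalf] eK].
have e1 : eps < 1 by lra.
set e' := eps / L.
have e'0 : 0 < e' by rewrite divr_gt0.
have e'le : e' <= eps by rewrite ler_pdivrMr // ler_peMr // ltW.
have ell : 0 < ln (1 / eps) by apply: ln_gt0; rewrite div1r invf_gt1.
have lne' : ln (1 / e') = ln L + ln (1 / eps).
  have -> : 1 / e' = L * (1 / eps) by rewrite /e' !div1r invf_div.
  by rewrite lnM // posrE // div1r invr_gt0.
have lne'0 : 0 < ln (1 / e').
  by apply: ln_gt0; rewrite div1r invf_gt1 //; lra.
have Kl : K < ln (1 / eps).
  rewrite div1r lnV ?posrE // ltrNr -(expRK (- K)).
  by rewrite ltr_ln ?posrE ?expR_gt0.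
apply: le_trans (_ : (g e' * ((ln (1 / eps))^-1)%:E <= _)%E).
  apply: lee_wpmul2r; first by rewrite lee_fin invr_ge0 ltW.
  by apply: fg; rewrite e0 e1.
have -> : (g e' * ((ln (1 / eps))^-1)%:E =
    (g e' * ((ln (1 / e'))^-1)%:E) * (ln (1 / e') / ln (1 / eps))%:E)%E.
  by rewrite -muleA -EFinM mulrA (mulVf (lt0r_neq0 lne'0)) (mul1r (ln (1 / eps))^-1).
apply: le_trans (_ : (s%:E * (ln (1 / e') / ln (1 / eps))%:E <= _)%E).
  apply: lee_wpmul2r; first by rewrite lee_fin divr_ge0 // ltW.
  apply: le_trans ys; apply: gy; rewrite e'0 /=; lra.
rewrite -EFinM lee_fin mulrA ler_pdivrMr // lne'.
have h1 : 0 <= (`|s| - s) * ln L by rewrite mulr_ge0 ?ln_ge0 // subr_ge0 ler_norm.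
have h2 : 0 <= (ln (1 / eps) - K) * (c - s) by rewrite mulr_ge0 // ltW // subr_gt0.
nra.
Qed.

End Helpers.

Theorem proposition2p11 (R : realType) (X : Type) (d : X -> X -> R)
  (phi : X -> R -> X) :
  is_metric d -> is_flow d phi -> uniformly_lipschitz d phi ->
  forall Z : set X, Z !=set0 ->
  mdimB_flow d phi Z = mdimB_map d phi Z.
Proof.
move=> Hm Hf HL Z Z0.
have [L L0 HLip] := HL 1 ltr01.
set L' := Num.max L 1.
have L'1 : 1 <= L' by rewrite le_max lexx orbT.
have L'0 : 0 < L' by exact: lt_le_trans ltr01 L'1.
have HLip' : forall eps x y, 0 < eps -> d x y <= eps / L' ->
    forall s, 0 <= s <= 1 -> d (phi x s) (phi y s) < eps.
  move=> eps x y e0 dxy; apply: HLip => //; apply: le_trans dxy _.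
  rewrite ler_pM2l // lef_pV2 ?posrE //.
  by rewrite le_max lexx.
apply/eqP; rewrite eq_le; apply/andP; split.
- apply: (@U_scale R _ _ L' L'1) => eps /andP[e0 _].
  apply: M_crit_le; apply: transfer_shift => n x.
  exact: ball_map_flow.
- apply: U_le => eps _.
  apply: M_crit_le; apply: transfer_same => n x.
  exact: ball_flow_map.
Qed.
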